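(* Let $\alpha: I\to M$ be a unit-speed curve on an oriented surface $M\subset E^3$ with Darboux frame $\{T,V,U\}$ and curvatures $k_g,k_n,\tau_g$, and assume $(k_g(s),\tau_g(s))\neq(0,0)$ for all $s$. Let $\gamma(s)=\alpha(s)+y_1(s)T(s)+y_2(s)V(s)+y_3(s)U(s)$, with $y_i$ smooth, be an associated curve whose tangent $\gamma'(s)$ is linearly dependent with $V(s)$, i.e. $\gamma'(s)=R(s)V(s)$ with $R(s)\neq0$ for all $s$. Then the following are equivalent: (i) $\gamma$ is a general helix; (ii) $\alpha$ is a relatively normal-slant helix; (iii) $\alpha$ is a $D_r$-Darboux slant helix.
   Context: $M$ is an oriented surface in Euclidean 3-space $E^3$ and $\alpha:I\to M$ is a unit-speed curve with arc-length parameter $s$. Its Darboux frame $\{T,V,U\}$ consists of the unit tangent $T=\alpha'$, the unit surface normal $U$ of $M$ along $\alpha$, and $V=U\times T$; it satisfies $T'=k_gV+k_nU$, $V'=-k_gT+\tau_gU$, $U'=-k_nT-\tau_gV$, where $k_g,k_n,\tau_g$ are the geodesic curvature, normal curvature and geodesic torsion. A regular curve is a general helix if its unit tangent makes a constant angle with a fixed direction. $\alpha$ is a relatively normal-slant helix if $\langle V,d\rangle$ is constant for some fixed unit vector $d$. The rectifying Darboux vector field is $D_r=\tau_gT+k_gU$; $\alpha$ is a $D_r$-Darboux slant helix if $D_r/\|D_r\|$ makes a constant angle with a fixed unit direction. *)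

(* Defs.v *)
From Stdlib Require Import Reals.
From Coquelicot Require Import Coquelicot.
Open Scope R_scope.

Record V3 := mkV3 { v1 : R; v2 : R; v3 : R }.

Definition vadd (x y : V3) : V3 := mkV3 (v1 x + v1 y) (v2 x + v2 y) (v3 x + v3 y).
Definition vscale (c : R) (x : V3) : V3 := mkV3 (c * v1 x) (c * v2 x) (c * v3 x).
Definition vzero : V3 := mkV3 0 0 0.
Definition dot (x y : V3) : R := v1 x * v1 y + v2 x * v2 y + v3 x * v3 y.
Definition cross (x y : V3) : V3 :=
  mkV3 (v2 x * v3 y - v3 x * v2 y) (v3 x * v1 y - v1 x * v3 y) (v1 x * v2 y - v2 x * v1 y).
Definition vnorm (x : V3) : R := sqrt (dot x x).
Definition unitv (x : V3) : V3 := vscale (/ vnorm x) x.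

Definition interval (a b : Rbar) (s : R) : Prop := Rbar_lt a s /\ Rbar_lt s b.

Definition smooth_on (I : R -> Prop) (f : R -> R) : Prop :=
  forall (n : nat) (s : R), I s -> ex_derive_n f n s.

Definition vsmooth_on (I : R -> Prop) (f : R -> V3) : Prop :=
  smooth_on I (fun t => v1 (f t)) /\ smooth_on I (fun t => v2 (f t)) /\
  smooth_on I (fun t => v3 (f t)).

Definition vD (f : R -> V3) (s : R) : V3 :=
  mkV3 (Derive (fun t => v1 (f t)) s) (Derive (fun t => v2 (f t)) s)
       (Derive (fun t => v3 (f t)) s).

(* Darboux frame {T, V, U} of alpha, U the unit surface normal along alpha. *)
Definition dT (alpha : R -> V3) : R -> V3 := vD alpha.
Definition dV (alpha U : R -> V3) : R -> V3 := fun s => cross (U s) (dT alpha s).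

(* Geodesic curvature, normal curvature and geodesic torsion
   (coefficients of the Darboux equations T' = kg V + kn U, V' = -kg T + tg U). *)
Definition kg (alpha U : R -> V3) (s : R) : R := dot (vD (dT alpha) s) (dV alpha U s).
Definition kn (alpha U : R -> V3) (s : R) : R := dot (vD (dT alpha) s) (U s).
Definition tg (alpha U : R -> V3) (s : R) : R := dot (vD (dV alpha U) s) (U s).

Definition Dr (alpha U : R -> V3) (s : R) : V3 :=
  vadd (vscale (tg alpha U s) (dT alpha s)) (vscale (kg alpha U s) (U s)).

Definition general_helix (I : R -> Prop) (gamma : R -> V3) : Prop :=
  (forall s, I s -> vD gamma s <> vzero) /\
  exists d : V3, dot d d = 1 /\ exists c : R,
    forall s, I s -> dot (unitv (vD gamma s)) d = c.

Definition rel_normal_slant_helix (I : R -> Prop) (alpha U : R -> V3) : Prop :=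
  exists d : V3, dot d d = 1 /\ exists c : R,
    forall s, I s -> dot (dV alpha U s) d = c.

Definition Dr_slant_helix (I : R -> Prop) (alpha U : R -> V3) : Prop :=
  exists d : V3, dot d d = 1 /\ exists c : R,
    forall s, I s -> dot (unitv (Dr alpha U s)) d = c.

Definition assoc_curve (alpha U : R -> V3) (y1 y2 y3 : R -> R) (t : R) : V3 :=
  vadd (alpha t) (vadd (vscale (y1 t) (dT alpha t))
        (vadd (vscale (y2 t) (dV alpha U t)) (vscale (y3 t) (U t)))).

(* Main.v *)
Require Import Defs.
From Stdlib Require Import Reals Lra.
From Coquelicot Require Import Coquelicot.
Open Scope R_scope.

Definition opn (I : R -> Prop) := forall s, I s -> locally s I.

Fixpoint Ck (I : R -> Prop) (n : nat) (f : R -> R) : Prop :=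
  match n with
  | O => True
  | S m => (forall s, I s -> ex_derive f s) /\ Ck I m (Derive f)
  end.

Inductive Sm (I : R -> Prop) (f : R -> R) : Prop := mkSm : (forall n, Ck I n f) -> Sm I f.

Lemma loc_ext I (f g : R -> R) s : opn I -> I s -> (forall t, I t -> f t = g t) ->
  locally s (fun t => f t = g t).
Proof.
intros HI Hs H. destruct (HI s Hs) as [e He]. exists e. intros y Hy. apply H, He, Hy.
Qed.

Lemma Ck_ext I n : opn I -> forall f g, Ck I n f -> (forall s, I s -> f s = g s) -> Ck I n g.
Proof.
intro HI; induction n as [|n IH]; simpl; auto.
intros f g [H1 H2] E. split.
- intros s Hs. apply ex_derive_ext_loc with f; [apply loc_ext with I; auto|auto].
- apply IH with (Derive f); auto. intros s Hs. apply Derive_ext_loc. apply loc_ext with I; auto.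
Qed.

Lemma Ck_S I n : forall f, Ck I (S n) f -> Ck I n f.
Proof.
induction n as [|n IH]; simpl; auto.
intros f [H1 H2]. split; auto.
Qed.

Lemma Ck_const I n : opn I -> forall c, Ck I n (fun _ => c).
Proof.
intro HI. induction n as [|n IH]; simpl; auto. intro c. split.
- intros. apply ex_derive_const.
- apply Ck_ext with (fun _ => 0); auto. intros. rewrite Derive_const; reflexivity.
Qed.

Lemma Ck_plus I n : opn I -> forall f g, Ck I n f -> Ck I n g -> Ck I n (fun t => f t + g t).
Proof.
intro HI. induction n as [|n IH]; simpl; auto. intros f g [F1 F2] [G1 G2]. split.
- intros. apply (ex_derive_plus f g); auto.
- apply Ck_ext with (fun t => Derive f t + Derive g t); auto.
  intros. rewrite (Derive_plus f g); auto.
Qed.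

Lemma Ck_mult I n : opn I -> forall f g, Ck I n f -> Ck I n g -> Ck I n (fun t => f t * g t).
Proof.
intro HI. induction n as [|n IH]; simpl; auto. intros f g F G.
pose proof (Ck_S I n f F) as F'. pose proof (Ck_S I n g G) as G'.
destruct F as [F1 F2], G as [G1 G2]. split.
- intros. apply ex_derive_mult; auto.
- apply Ck_ext with (fun t => Derive f t * g t + f t * Derive g t); auto.
  + apply Ck_plus; auto.
  + intros. rewrite Derive_mult; auto.
Qed.

Lemma Ck_inv I n : opn I -> forall f, Ck I n f -> (forall s, I s -> f s <> 0) -> Ck I n (fun t => / f t).
Proof.
intro HI. induction n as [|n IH]; simpl; auto. intros f F Hf.
pose proof (Ck_S I n f F) as F'. destruct F as [F1 F2]. split.
- intros. apply ex_derive_inv; auto.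
- apply Ck_ext with (fun t => (-1) * Derive f t * (/ f t * / f t)); auto.
  + apply Ck_mult; auto. apply Ck_mult; auto. apply Ck_const; auto. apply Ck_mult; auto.
  + intros. rewrite Derive_inv; auto. field. auto.
Qed.

Lemma Ck_sqrt I n : opn I -> forall f, Ck I n f -> (forall s, I s -> 0 < f s) -> Ck I n (fun t => sqrt (f t)).
Proof.
intro HI. induction n as [|n IH]; simpl; auto. intros f F Hf.
pose proof (Ck_S I n f F) as F'. destruct F as [F1 F2].
assert (D : forall s, I s -> is_derive (fun t => sqrt (f t)) s (Derive f s / (2 * sqrt (f s)))).
{ intros. apply is_derive_sqrt; auto. apply Derive_correct; auto. }
split.
- intros. eexists. apply D; auto.
- apply Ck_ext with (fun t => Derive f t * (/2 * / sqrt (f t))); auto.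
  + apply Ck_mult; auto. apply Ck_mult; auto. apply Ck_const; auto. apply Ck_inv; auto.
    intros s Hs. apply Rgt_not_eq. apply sqrt_lt_R0. auto.
  + intros s Hs. replace (Derive (fun t => sqrt (f t)) s) with (Derive f s / (2 * sqrt (f s)))
      by (symmetry; apply is_derive_unique; apply D; auto). field.
    apply Rgt_not_eq. apply sqrt_lt_R0. auto.
Qed.

Lemma Sm_const I c : opn I -> Sm I (fun _ => c).
Proof. intros HI. constructor. intro n. apply Ck_const; auto. Qed.
Lemma Sm_plus I f g : opn I -> Sm I f -> Sm I g -> Sm I (fun t => f t + g t).
Proof. intros HI [F] [G]. constructor. intro n. apply Ck_plus; auto. Qed.
Lemma Sm_mult I f g : opn I -> Sm I f -> Sm I g -> Sm I (fun t => f t * g t).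
Proof. intros HI [F] [G]. constructor. intro n. apply Ck_mult; auto. Qed.
Lemma Sm_minus I f g : opn I -> Sm I f -> Sm I g -> Sm I (fun t => f t - g t).
Proof. intros HI [F] [G]. constructor. intro n. apply Ck_ext with (fun t => f t + (-1) * g t); auto.
 apply Ck_plus; auto. apply Ck_mult; auto. apply Ck_const; auto. intros; ring. Qed.
Lemma Sm_inv I f : opn I -> Sm I f -> (forall s, I s -> f s <> 0) -> Sm I (fun t => / f t).
Proof. intros HI [F] H. constructor. intro n. apply Ck_inv; auto. Qed.
Lemma Sm_div I f g : opn I -> Sm I f -> Sm I g -> (forall s, I s -> g s <> 0) -> Sm I (fun t => f t / g t).
Proof. intros HI [F] [G] H. constructor. intro n. apply Ck_mult; auto. apply Ck_inv; auto. Qed.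
Lemma Sm_sqrt I f : opn I -> Sm I f -> (forall s, I s -> 0 < f s) -> Sm I (fun t => sqrt (f t)).
Proof. intros HI [F] H. constructor. intro n. apply Ck_sqrt; auto. Qed.
Lemma Sm_ext I f g : opn I -> Sm I f -> (forall s, I s -> f s = g s) -> Sm I g.
Proof. intros HI [F] H. constructor. intro n. apply Ck_ext with f; auto. Qed.
Lemma Sm_D I f : Sm I f -> Sm I (Derive f).
Proof. intros [F]. constructor. intro n. exact (proj2 (F (S n))). Qed.
Lemma Sm_ex I f s : Sm I f -> I s -> ex_derive f s.
Proof. intros [F] Hs. exact (proj1 (F 1%nat) s Hs). Qed.
Lemma Sm_cont I f s : Sm I f -> I s -> continuous f s.
Proof. intros F Hs. apply (ex_derive_continuous (K:=R_AbsRing) (V:=R_NormedModule)). apply (Sm_ex I); auto. Qed.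
Lemma Sm_isd I f s : Sm I f -> I s -> is_derive f s (Derive f s).
Proof. intros F Hs. apply Derive_correct. apply (Sm_ex I); auto. Qed.

Lemma smooth_Sm I f : smooth_on I f -> Sm I f.
Proof.
intros H. constructor. intro n. change f with (Derive_n f 0). generalize 0%nat as k.
induction n as [|n IH]; simpl; auto. intro k. split.
- intros s Hs. exact (H (S k) s Hs).
- exact (IH (S k)).
Qed.


Lemma Rbar_lt_loc_l (a : Rbar) (s : R) : Rbar_lt a s -> exists e, 0 < e /\ forall y, Rabs (y - s) < e -> Rbar_lt a y.
Proof.
destruct a as [a| |]; intros H; simpl in H.
- exists (s - a). split; [lra|]. intros y Hy. apply Rabs_def2 in Hy. destruct Hy; simpl; lra.
- contradiction.
- exists 1. split; [lra|]. auto.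
Qed.

Lemma Rbar_lt_loc_r (b : Rbar) (s : R) : Rbar_lt s b -> exists e, 0 < e /\ forall y, Rabs (y - s) < e -> Rbar_lt y b.
Proof.
destruct b as [b| |]; intros H; simpl in H.
- exists (b - s). split; [lra|]. intros y Hy. apply Rabs_def2 in Hy. destruct Hy; simpl; lra.
- exists 1. split; [lra|]. auto.
- contradiction.
Qed.

Lemma interval_opn a b (s : R) : interval a b s -> locally s (interval a b).
Proof.
intros [Ha Hb]. destruct (Rbar_lt_loc_l a s Ha) as [e1 [E1 H1]].
destruct (Rbar_lt_loc_r b s Hb) as [e2 [E2 H2]].
assert (P : 0 < Rmin e1 e2) by (apply Rmin_pos; auto).
exists (mkposreal _ P). intros y Hy. change (Rabs (y - s) < Rmin e1 e2) in Hy.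
split; [apply H1|apply H2]; eapply Rlt_le_trans; eauto; [apply Rmin_l|apply Rmin_r].
Qed.

Lemma interval_conv a b (s t u : R) : interval a b s -> interval a b t -> s <= u <= t -> interval a b u.
Proof.
intros [Ha _] [_ Hb] Hu. split.
- destruct a as [a| |]; simpl in *; auto; lra.
- destruct b as [b| |]; simpl in *; auto; lra.
Qed.

Lemma disc_aux x y K : (x = 0 \/ x * x = K) -> (y = 0 \/ y * y = K) -> x <> y ->
  let z := (x + 3 * y) / 4 in z <> 0 /\ z * z <> K.
Proof.
intros Hx Hy Hne z. unfold z.
destruct Hx as [Hx|Hx]; destruct Hy as [Hy|Hy].
- subst; lra.
- subst x. split; intro C.
  + apply Hne. lra.
  + assert (y * y = 0) by nra. assert (y = 0) by nra. lra.
- subst y. split; intro C.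
  + apply Hne. lra.
  + assert (x * x = 0) by nra. assert (x = 0) by nra. lra.
- assert (E : (x - y) * (x + y) = 0) by nra.
  destruct (Rmult_integral _ _ E) as [E1|E1]; [lra|].
  assert (x = - y) by lra. subst x. split; intro C.
  + apply Hne. lra.
  + assert (y * y = 0) by nra. assert (y = 0) by nra. lra.
Qed.

Lemma discv a b (g : R -> R) K :
  (forall s, interval a b s -> continuous g s) ->
  (forall s, interval a b s -> g s = 0 \/ g s * g s = K) ->
  forall s t, interval a b s -> interval a b t -> g s = g t.
Proof.
intros Hc Hv.
assert (M : forall s t, s <= t -> interval a b s -> interval a b t -> g s = g t).
{ intros s t Hst Hs Ht. destruct (Req_dec (g s) (g t)) as [E|Hne]; auto. exfalso.
  destruct (disc_aux (g s) (g t) K (Hv s Hs) (Hv t Ht) Hne) as [Z1 Z2].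
  set (z := (g s + 3 * g t) / 4) in *.
  destruct (Req_dec s t) as [<-|Hst']; [auto|].
  assert (Hlt : s < t) by lra.
  assert (CP : forall u, s <= u <= t -> continuity_pt g u).
  { intros u Hu. apply continuity_pt_filterlim. apply Hc. apply interval_conv with s t; auto. }
  destruct (Rlt_or_le (g s) (g t)) as [L|L].
  - destruct (Ranalysis5.IVT_interv (fun u => g u - z) s t) as [u [Hu Eu]]; auto.
    + intros u Hu. apply continuity_pt_minus; auto. apply continuity_pt_const. intros ? ?; auto.
    + unfold z; lra.
    + unfold z; lra.
    + assert (g u = z) by lra. destruct (Hv u (interval_conv a b s t u Hs Ht Hu)); congruence.
  - destruct (Ranalysis5.IVT_interv (fun u => z - g u) s t) as [u [Hu Eu]]; auto.
    + intros u Hu. apply continuity_pt_minus; auto. apply continuity_pt_const. intros ? ?; auto.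
    + unfold z; lra.
    + unfold z; lra.
    + assert (g u = z) by lra. destruct (Hv u (interval_conv a b s t u Hs Ht Hu)); congruence. }
intros s t Hs Ht. destruct (Rle_or_lt s t); [apply M; auto|symmetry; apply M; auto; lra].
Qed.

Lemma deriv0_const a b (g : R -> R) :
  (forall s, interval a b s -> is_derive g s 0) ->
  forall s t, interval a b s -> interval a b t -> g s = g t.
Proof.
intros Hd.
assert (M : forall s t, s <= t -> interval a b s -> interval a b t -> g s = g t).
{ intros s t Hst Hs Ht.
  destruct (MVT_gen g s t (fun _ => 0)) as [c [_ Hc]].
  - intros x Hx. rewrite Rmin_left, Rmax_right in Hx by lra. apply Hd.
    apply interval_conv with s t; auto; lra.
  - intros x Hx. rewrite Rmin_left, Rmax_right in Hx by lra. apply continuity_pt_filterlim.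
    apply (ex_derive_continuous (K:=R_AbsRing) (V:=R_NormedModule)). eexists. apply Hd.
    apply interval_conv with s t; auto; lra.
  - lra. }
intros s t Hs Ht. destruct (Rle_or_lt s t); [apply M; auto|symmetry; apply M; auto; lra].
Qed.

Lemma isd_plus (f g : R -> R) s a b : is_derive f s a -> is_derive g s b -> is_derive (fun t => f t + g t) s (a + b).
Proof. intros. apply (is_derive_plus (K:=R_AbsRing) (V:=R_NormedModule)); auto. Qed.
Lemma isd_minus (f g : R -> R) s a b : is_derive f s a -> is_derive g s b -> is_derive (fun t => f t - g t) s (a - b).
Proof. intros. apply (is_derive_minus (K:=R_AbsRing) (V:=R_NormedModule)); auto. Qed.
Lemma isd_mult (f g : R -> R) s a b : is_derive f s a -> is_derive g s b -> is_derive (fun t => f t * g t) s (a * g s + f s * b).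
Proof. intros. apply (is_derive_mult (K:=R_AbsRing)); auto. intros; apply Rmult_comm. Qed.
Lemma isd_eq (f : R -> R) (s a b : R) : is_derive f s a -> a = b -> is_derive f s b.
Proof. intros; subst; auto. Qed.

Definition VSm I (F : R -> V3) := Sm I (fun t => v1 (F t)) /\ Sm I (fun t => v2 (F t)) /\ Sm I (fun t => v3 (F t)).

Lemma VSm_D I F : VSm I F -> VSm I (vD F).
Proof. intros [H1 [H2 H3]]. split; [|split]; apply Sm_D; auto. Qed.

Lemma Sm_dot I F G : opn I -> VSm I F -> VSm I G -> Sm I (fun t => dot (F t) (G t)).
Proof. intros HI [F1 [F2 F3]] [G1 [G2 G3]]. unfold dot.
repeat (apply Sm_plus; auto); apply Sm_mult; auto. Qed.

Lemma VSm_cross I F G : opn I -> VSm I F -> VSm I G -> VSm I (fun t => cross (F t) (G t)).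
Proof. intros HI [F1 [F2 F3]] [G1 [G2 G3]]. unfold cross; simpl.
split; [|split]; apply Sm_minus; auto; apply Sm_mult; auto. Qed.

Lemma VSm_add I F G : opn I -> VSm I F -> VSm I G -> VSm I (fun t => vadd (F t) (G t)).
Proof. intros HI [F1 [F2 F3]] [G1 [G2 G3]]. unfold vadd; simpl.
split; [|split]; apply Sm_plus; auto. Qed.

Lemma VSm_scale I c F : opn I -> Sm I c -> VSm I F -> VSm I (fun t => vscale (c t) (F t)).
Proof. intros HI C [F1 [F2 F3]]. unfold vscale; simpl.
split; [|split]; apply Sm_mult; auto. Qed.

Lemma VSm_of I F : vsmooth_on I F -> VSm I F.
Proof. intros [H1 [H2 H3]]. split; [|split]; apply smooth_Sm; auto. Qed.

Lemma isd_dot I F G s : VSm I F -> VSm I G -> I s ->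
 is_derive (fun t => dot (F t) (G t)) s (dot (vD F s) (G s) + dot (F s) (vD G s)).
Proof.
intros [F1 [F2 F3]] [G1 [G2 G3]] Hs. unfold dot at 1.
eapply isd_eq.
{ apply isd_plus; [apply isd_plus|]; apply isd_mult; apply (Sm_isd I); auto. }
unfold dot, vD; simpl. ring.
Qed.

Ltac isd_leaf I := match goal with
 | |- is_derive (fun _ => ?c) _ _ => apply (is_derive_const (K:=R_AbsRing) (V:=R_NormedModule) c)
 | _ => apply (Sm_isd I); auto end.

Lemma isd_dotc I F e s : VSm I F -> I s ->
 is_derive (fun t => dot (F t) e) s (dot (vD F s) e).
Proof.
intros [F1 [F2 F3]] Hs. unfold dot at 1.
eapply isd_eq.
{ apply isd_plus; [apply isd_plus|]; apply isd_mult; isd_leaf I. }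
unfold dot, vD; simpl. change (@zero R_NormedModule) with 0. ring.
Qed.

Lemma isd_const0 I (h : R -> R) c s l : opn I -> (forall t, I t -> h t = c) -> I s -> is_derive h s l -> l = 0.
Proof.
intros HI H Hs D.
assert (D2 : is_derive h s 0).
{ apply is_derive_ext_loc with (fun _ => c). apply loc_ext with I; auto. intros; symmetry; auto.
  apply (is_derive_const (K:=R_AbsRing) (V:=R_NormedModule) c). }
rewrite <- (is_derive_unique _ _ _ D). apply is_derive_unique; auto.
Qed.

Lemma is_derive_Dunique (h : R -> R) s l1 l2 : is_derive h s l1 -> is_derive h s l2 -> l1 = l2.
Proof. intros D1 D2. rewrite <- (is_derive_unique _ _ _ D1). apply is_derive_unique; auto. Qed.

Lemma expand (X e T U : V3) : dot T T = 1 -> dot U U = 1 -> dot U T = 0 ->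
  dot X e = dot X T * dot T e + dot X (cross U T) * dot (cross U T) e + dot X U * dot U e.
Proof.
intros H1 H2 H3.
destruct X as [x1 x2 x3], e as [e1 e2 e3], T as [t1 t2 t3], U as [u1 u2 u3].
unfold dot, cross in *; simpl in *.
set (uu := u1*u1+u2*u2+u3*u3) in *. set (tt := t1*t1+t2*t2+t3*t3) in *.
set (ut := u1*t1+u2*t2+u3*t3) in *.
(* Binet-Cauchy *)
assert (B : ((u2*t3-u3*t2)*x1 + (u3*t1-u1*t3)*x2 + (u1*t2-u2*t1)*x3) *
            ((u2*t3-u3*t2)*e1 + (u3*t1-u1*t3)*e2 + (u1*t2-u2*t1)*e3)
   = uu * (tt * (x1*e1+x2*e2+x3*e3) - (t1*e1+t2*e2+t3*e3)*(x1*t1+x2*t2+x3*t3))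
     - ut * (ut * (x1*e1+x2*e2+x3*e3) - (t1*e1+t2*e2+t3*e3)*(x1*u1+x2*u2+x3*u3))
     + (u1*e1+u2*e2+u3*e3) * (ut * (x1*t1+x2*t2+x3*t3) - tt * (x1*u1+x2*u2+x3*u3))).
{ unfold uu, tt, ut. ring. }
rewrite H1, H2, H3 in B.
replace ((x1 * (u2 * t3 - u3 * t2) + x2 * (u3 * t1 - u1 * t3) + x3 * (u1 * t2 - u2 * t1)) *
 ((u2 * t3 - u3 * t2) * e1 + (u3 * t1 - u1 * t3) * e2 + (u1 * t2 - u2 * t1) * e3))
 with (((u2*t3-u3*t2)*x1 + (u3*t1-u1*t3)*x2 + (u1*t2-u2*t1)*x3) *
            ((u2*t3-u3*t2)*e1 + (u3*t1-u1*t3)*e2 + (u1*t2-u2*t1)*e3)) by ring.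
rewrite B. ring.
Qed.


Definition GH a b alpha U :=
  vsmooth_on (interval a b) alpha /\ vsmooth_on (interval a b) U /\
  (forall s, interval a b s -> dot (dT alpha s) (dT alpha s) = 1) /\
  (forall s, interval a b s -> dot (U s) (U s) = 1) /\
  (forall s, interval a b s -> dot (U s) (dT alpha s) = 0) /\
  (forall s, interval a b s -> (kg alpha U s, tg alpha U s) <> (0, 0)).

Lemma opnI a b : opn (interval a b).
Proof. intros s Hs. apply interval_opn; auto. Qed.
#[local] Hint Resolve opnI : core.


Lemma sm_T a b alpha U : GH a b alpha U -> VSm (interval a b) (dT alpha).
Proof. intros [H _]. apply VSm_D, VSm_of; auto. Qed.
Lemma sm_U a b alpha U : GH a b alpha U -> VSm (interval a b) U.
Proof. intros [_ [H _]]. apply VSm_of; auto. Qed.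
Lemma sm_V a b alpha U : GH a b alpha U -> VSm (interval a b) (dV alpha U).
Proof. intros H. unfold dV. apply VSm_cross; auto. apply (sm_U _ _ alpha); auto. apply (sm_T _ _ _ U); auto. Qed.
Lemma sm_kg a b alpha U : GH a b alpha U -> Sm (interval a b) (kg alpha U).
Proof. intros H. unfold kg. apply Sm_dot; auto. apply VSm_D, (sm_T _ _ _ U); auto. apply sm_V; auto. Qed.
Lemma sm_kn a b alpha U : GH a b alpha U -> Sm (interval a b) (kn alpha U).
Proof. intros H. unfold kn. apply Sm_dot; auto. apply VSm_D, (sm_T _ _ _ U); auto. apply (sm_U _ _ alpha); auto. Qed.
Lemma sm_tg a b alpha U : GH a b alpha U -> Sm (interval a b) (tg alpha U).
Proof. intros H. unfold tg. apply Sm_dot; auto. apply VSm_D, sm_V; auto. apply (sm_U _ _ alpha); auto. Qed.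

Lemma w2pos a b alpha U s : GH a b alpha U -> interval a b s ->
  0 < kg alpha U s * kg alpha U s + tg alpha U s * tg alpha U s.
Proof.
intros H Hs. destruct H as [_ [_ [_ [_ [_ H]]]]]. specialize (H s Hs).
destruct (Req_dec (kg alpha U s) 0) as [E1|E1].
- destruct (Req_dec (tg alpha U s) 0) as [E2|E2].
  + exfalso; apply H; rewrite E1, E2; auto.
  + rewrite E1. assert (0 < tg alpha U s * tg alpha U s) by (apply Rsqr_pos_lt; auto). lra.
- assert (0 < kg alpha U s * kg alpha U s) by (apply Rsqr_pos_lt; auto).
  assert (0 <= tg alpha U s * tg alpha U s) by apply Rle_0_sqr. lra.
Qed.

Definition wf alpha U t := sqrt (kg alpha U t * kg alpha U t + tg alpha U t * tg alpha U t).
Definition ff alpha U t := tg alpha U t / wf alpha U t.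
Definition gf alpha U t := kg alpha U t / wf alpha U t.
Definition rho alpha U t := (Derive (tg alpha U) t * kg alpha U t - Derive (kg alpha U) t * tg alpha U t) / (wf alpha U t * wf alpha U t).
Definition theta alpha U t := rho alpha U t - kn alpha U t.
Definition xe alpha (e : V3) t := dot (dT alpha t) e.
Definition qe alpha U (e : V3) t := dot (dV alpha U t) e.
Definition ze (U : R -> V3) (e : V3) t := dot (U t) e.
Definition ce alpha U e t := ff alpha U t * xe alpha e t + gf alpha U t * ze U e t.
Definition he alpha U e t := gf alpha U t * xe alpha e t - ff alpha U t * ze U e t.

Lemma wpos a b alpha U s : GH a b alpha U -> interval a b s -> 0 < wf alpha U s.
Proof. intros. apply sqrt_lt_R0, w2pos with a b; auto. Qed.
Lemma wsq a b alpha U s : GH a b alpha U -> interval a b s ->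
  wf alpha U s * wf alpha U s = kg alpha U s * kg alpha U s + tg alpha U s * tg alpha U s.
Proof. intros. unfold wf. apply sqrt_sqrt. left. apply w2pos with a b; auto. Qed.

Lemma sm_w a b alpha U : GH a b alpha U -> Sm (interval a b) (wf alpha U).
Proof. intros H. unfold wf. apply Sm_sqrt; auto.
 apply Sm_plus; auto; apply Sm_mult; auto; first [apply sm_kg|apply sm_tg]; auto.
 intros. apply w2pos with a b; auto. Qed.
Lemma wne a b alpha U s : GH a b alpha U -> interval a b s -> wf alpha U s <> 0.
Proof. intros. apply Rgt_not_eq, wpos with a b; auto. Qed.
Lemma sm_ff a b alpha U : GH a b alpha U -> Sm (interval a b) (ff alpha U).
Proof. intros H. apply Sm_div; auto. apply sm_tg; auto. apply sm_w; auto. intros; apply wne with a b; auto. Qed.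
Lemma sm_gf a b alpha U : GH a b alpha U -> Sm (interval a b) (gf alpha U).
Proof. intros H. apply Sm_div; auto. apply sm_kg; auto. apply sm_w; auto. intros; apply wne with a b; auto. Qed.
Lemma sm_rho a b alpha U : GH a b alpha U -> Sm (interval a b) (rho alpha U).
Proof. intros H. unfold rho. apply Sm_div; auto.
 apply Sm_minus; auto; apply Sm_mult; auto; try apply Sm_D; first [apply sm_kg|apply sm_tg]; auto.
 apply Sm_mult; auto; apply sm_w; auto.
 intros. apply Rmult_integral_contrapositive_currified; apply wne with a b; auto. Qed.
Lemma sm_theta a b alpha U : GH a b alpha U -> Sm (interval a b) (theta alpha U).
Proof. intros H. apply Sm_minus; auto. apply sm_rho; auto. apply sm_kn; auto. Qed.
Lemma sm_xe a b alpha U e : GH a b alpha U -> Sm (interval a b) (xe alpha e).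
Proof. intros H. apply Sm_dot with (G := fun _ => e); auto. apply (sm_T _ _ _ U); auto.
 split; [|split]; apply Sm_const; auto. Qed.
Lemma sm_ze a b alpha U e : GH a b alpha U -> Sm (interval a b) (ze U e).
Proof. intros H. apply Sm_dot with (G := fun _ => e); auto. apply (sm_U _ _ alpha); auto.
 split; [|split]; apply Sm_const; auto. Qed.
Lemma sm_qe a b alpha U e : GH a b alpha U -> Sm (interval a b) (qe alpha U e).
Proof. intros H. apply Sm_dot with (G := fun _ => e); auto. apply sm_V; auto.
 split; [|split]; apply Sm_const; auto. Qed.
Lemma sm_ce a b alpha U e : GH a b alpha U -> Sm (interval a b) (ce alpha U e).
Proof. intros H. apply Sm_plus; auto; apply Sm_mult; auto;
 first [apply sm_ff|apply sm_gf|apply (sm_xe a b alpha U)|apply (sm_ze a b alpha)]; auto. Qed.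
Lemma sm_he a b alpha U e : GH a b alpha U -> Sm (interval a b) (he alpha U e).
Proof. intros H. apply Sm_minus; auto; apply Sm_mult; auto;
 first [apply sm_ff|apply sm_gf|apply (sm_xe a b alpha U)|apply (sm_ze a b alpha)]; auto. Qed.

#[local] Hint Resolve opnI : core.

Lemma dot_comm x y : dot x y = dot y x.
Proof. unfold dot; ring. Qed.

Lemma cst_dot I F G c s : opn I -> VSm I F -> VSm I G -> (forall t, I t -> dot (F t) (G t) = c) -> I s ->
  dot (vD F s) (G s) + dot (F s) (vD G s) = 0.
Proof. intros HI HF HG H Hs. apply (isd_const0 I (fun t => dot (F t) (G t)) c s); auto.
 apply (isd_dot I); auto. Qed.

Lemma VT_id (U T : V3) : dot (cross U T) T = 0.
Proof. destruct U, T; unfold dot, cross; simpl; ring. Qed.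
Lemma VU_id (U T : V3) : dot (cross U T) U = 0.
Proof. destruct U, T; unfold dot, cross; simpl; ring. Qed.
Lemma VV_id (U T : V3) : dot (cross U T) (cross U T) = dot U U * dot T T - dot U T * dot U T.
Proof. destruct U, T; unfold dot, cross; simpl; ring. Qed.


Lemma fr a b alpha U s : GH a b alpha U -> interval a b s ->
  let T := dT alpha in let V := dV alpha U in
  dot (vD T s) (T s) = 0 /\ dot (vD U s) (U s) = 0 /\
  dot (vD U s) (T s) = - kn alpha U s /\ dot (vD V s) (T s) = - kg alpha U s /\
  dot (vD V s) (V s) = 0 /\ dot (vD U s) (V s) = - tg alpha U s.
Proof.
intros H Hs T V.
pose proof (sm_T _ _ _ _ H) as ST. pose proof (sm_U _ _ _ _ H) as SU. pose proof (sm_V _ _ _ _ H) as SV.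
destruct H as [_ [_ [HTT [HUU [HUT _]]]]].
assert (A1 := cst_dot _ T T 1 s (opnI a b) ST ST HTT Hs).
assert (A2 := cst_dot _ U U 1 s (opnI a b) SU SU HUU Hs).
assert (A3 := cst_dot _ U T 0 s (opnI a b) SU ST HUT Hs).
assert (A4 := cst_dot _ V T 0 s (opnI a b) SV ST (fun t _ => VT_id (U t) (T t)) Hs).
assert (HVV : forall t, interval a b t -> dot (V t) (V t) = 1).
{ intros t Ht. unfold V, dV. rewrite VV_id. fold T. rewrite HUU, HTT, HUT by exact Ht. ring. }
assert (A5 := cst_dot _ V V 1 s (opnI a b) SV SV HVV Hs).
assert (A6 := cst_dot _ V U 0 s (opnI a b) SV SU (fun t _ => VU_id (U t) (T t)) Hs).
unfold kn, kg, tg. fold T V.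
rewrite (dot_comm (T s) (vD T s)) in A1.
rewrite (dot_comm (U s) (vD U s)) in A2.
rewrite (dot_comm (U s) (vD T s)) in A3.
rewrite (dot_comm (V s) (vD T s)) in A4.
rewrite (dot_comm (V s) (vD V s)) in A5.
rewrite (dot_comm (V s) (vD U s)) in A6.
repeat split; lra.
Qed.

#[local] Hint Resolve opnI : core.

Lemma GH_T a b alpha U s : GH a b alpha U -> interval a b s -> dot (dT alpha s) (dT alpha s) = 1.
Proof. intros [_ [_ [H _]]]; auto. Qed.
Lemma GH_U a b alpha U s : GH a b alpha U -> interval a b s -> dot (U s) (U s) = 1.
Proof. intros [_ [_ [_ [H _]]]]; auto. Qed.
Lemma GH_UT a b alpha U s : GH a b alpha U -> interval a b s -> dot (U s) (dT alpha s) = 0.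
Proof. intros [_ [_ [_ [_ [H _]]]]]; auto. Qed.

Lemma exp_at a b alpha U s X e : GH a b alpha U -> interval a b s ->
  dot X e = dot X (dT alpha s) * xe alpha e s + dot X (dV alpha U s) * qe alpha U e s + dot X (U s) * ze U e s.
Proof. intros H Hs. unfold xe, qe, ze, dV. apply expand.
 apply (GH_T a b alpha U); auto. apply (GH_U a b alpha U); auto. apply (GH_UT a b alpha U); auto. Qed.

Lemma d_xe a b alpha U e s : GH a b alpha U -> interval a b s ->
  is_derive (xe alpha e) s (kg alpha U s * qe alpha U e s + kn alpha U s * ze U e s).
Proof.
intros H Hs. eapply isd_eq. apply (isd_dotc (interval a b) (dT alpha) e s); auto. apply (sm_T _ _ _ U H).
destruct (fr a b alpha U s H Hs) as [F1 [F2 [F3 [F4 [F5 F6]]]]].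
rewrite (exp_at a b alpha U s _ e H Hs). rewrite F1. unfold kg, kn. ring.
Qed.

Lemma d_ze a b alpha U e s : GH a b alpha U -> interval a b s ->
  is_derive (ze U e) s (- kn alpha U s * xe alpha e s - tg alpha U s * qe alpha U e s).
Proof.
intros H Hs. eapply isd_eq. apply (isd_dotc (interval a b) U e s); auto. apply (sm_U _ _ alpha U H).
destruct (fr a b alpha U s H Hs) as [F1 [F2 [F3 [F4 [F5 F6]]]]].
rewrite (exp_at a b alpha U s _ e H Hs). rewrite F2, F3, F6. ring.
Qed.

Lemma d_qe a b alpha U e s : GH a b alpha U -> interval a b s ->
  is_derive (qe alpha U e) s (- kg alpha U s * xe alpha e s + tg alpha U s * ze U e s).
Proof.
intros H Hs. eapply isd_eq. apply (isd_dotc (interval a b) (dV alpha U) e s); auto. apply (sm_V _ _ alpha U H).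
destruct (fr a b alpha U s H Hs) as [F1 [F2 [F3 [F4 [F5 F6]]]]].
rewrite (exp_at a b alpha U s _ e H Hs). rewrite F4, F5. unfold tg. ring.
Qed.

Lemma d_w a b alpha U s : GH a b alpha U -> interval a b s ->
  is_derive (wf alpha U) s ((kg alpha U s * Derive (kg alpha U) s + tg alpha U s * Derive (tg alpha U) s) / wf alpha U s).
Proof.
intros H Hs. unfold wf. eapply isd_eq. apply is_derive_sqrt.
- apply isd_plus; apply isd_mult; apply (Sm_isd (interval a b)); auto; first [apply (sm_kg a b)|apply (sm_tg a b)]; auto.
- apply (w2pos a b); auto.
- cbv beta. fold (wf alpha U s). field. apply (wne a b); auto.
Qed.

Lemma alg_ff kg tg kg' tg' w : w <> 0 -> w*w = kg*kg+tg*tg ->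
  (tg' * w - tg * ((kg*kg' + tg*tg')/w)) / w^2 = kg/w * ((tg'*kg - kg'*tg)/(w*w)).
Proof. intros Hw E.
assert (K : tg' * (w*w) - tg*(kg*kg'+tg*tg') = kg*(tg'*kg - kg'*tg)) by (rewrite E; ring).
replace ((tg' * w - tg * ((kg*kg' + tg*tg')/w)) / w^2) with ((tg' * (w*w) - tg*(kg*kg'+tg*tg'))/(w*w*w)) by (field; auto).
rewrite K. field; auto. Qed.

Lemma alg_gf kg tg kg' tg' w : w <> 0 -> w*w = kg*kg+tg*tg ->
  (kg' * w - kg * ((kg*kg' + tg*tg')/w)) / w^2 = - (tg/w) * ((tg'*kg - kg'*tg)/(w*w)).
Proof. intros Hw E.
assert (K : kg' * (w*w) - kg*(kg*kg'+tg*tg') = - tg*(tg'*kg - kg'*tg)) by (rewrite E; ring).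
replace ((kg' * w - kg * ((kg*kg' + tg*tg')/w)) / w^2) with ((kg' * (w*w) - kg*(kg*kg'+tg*tg'))/(w*w*w)) by (field; auto).
rewrite K. field; auto. Qed.

Lemma d_ff a b alpha U s : GH a b alpha U -> interval a b s ->
  is_derive (ff alpha U) s (gf alpha U s * rho alpha U s).
Proof.
intros H Hs. unfold ff. eapply isd_eq. apply is_derive_div.
- apply (Sm_isd (interval a b)); auto. apply (sm_tg a b); auto.
- apply (d_w a b); auto.
- apply (wne a b); auto.
- unfold gf, rho. apply alg_ff. apply (wne a b); auto. apply (wsq a b); auto.
Qed.

Lemma d_gf a b alpha U s : GH a b alpha U -> interval a b s ->
  is_derive (gf alpha U) s (- ff alpha U s * rho alpha U s).
Proof.
intros H Hs. unfold gf. eapply isd_eq. apply is_derive_div.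
- apply (Sm_isd (interval a b)); auto. apply (sm_kg a b); auto.
- apply (d_w a b); auto.
- apply (wne a b); auto.
- unfold ff, rho. apply alg_gf. apply (wne a b); auto. apply (wsq a b); auto.
Qed.

Lemma fg_kg a b alpha U s : GH a b alpha U -> interval a b s ->
  kg alpha U s = gf alpha U s * wf alpha U s /\ tg alpha U s = ff alpha U s * wf alpha U s /\ ff alpha U s * ff alpha U s + gf alpha U s * gf alpha U s = 1.
Proof.
intros H Hs. pose proof (wne a b alpha U s H Hs). pose proof (wsq a b alpha U s H Hs).
unfold ff, gf. repeat split; try (field; auto).
replace (tg alpha U s / wf alpha U s * (tg alpha U s / wf alpha U s) +
  kg alpha U s / wf alpha U s * (kg alpha U s / wf alpha U s)) with
  ((kg alpha U s * kg alpha U s + tg alpha U s * tg alpha U s) / (wf alpha U s * wf alpha U s)) by (field; auto).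
rewrite <- H1. field. auto.
Qed.

Lemma d_ce a b alpha U e s : GH a b alpha U -> interval a b s ->
  is_derive (ce alpha U e) s (theta alpha U s * he alpha U e s).
Proof.
intros H Hs. unfold ce. eapply isd_eq.
{ apply isd_plus; [apply isd_mult; [apply (d_ff a b)|apply (d_xe a b alpha U)]|apply isd_mult; [apply (d_gf a b)|apply (d_ze a b alpha U)]]; auto. }
destruct (fg_kg a b alpha U s H Hs) as [E1 [E2 E3]].
unfold theta, he. rewrite E1, E2. ring.
Qed.

Lemma d_he a b alpha U e s : GH a b alpha U -> interval a b s ->
  is_derive (he alpha U e) s (- theta alpha U s * ce alpha U e s + wf alpha U s * qe alpha U e s).
Proof.
intros H Hs. unfold he. eapply isd_eq.
{ apply isd_minus; [apply isd_mult; [apply (d_gf a b)|apply (d_xe a b alpha U)]|apply isd_mult; [apply (d_ff a b)|apply (d_ze a b alpha U)]]; auto. }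
destruct (fg_kg a b alpha U s H Hs) as [E1 [E2 E3]].
unfold theta, ce. rewrite E1, E2.
replace (wf alpha U s * qe alpha U e s) with ((ff alpha U s * ff alpha U s + gf alpha U s * gf alpha U s) * wf alpha U s * qe alpha U e s) by (rewrite E3; ring).
ring.
Qed.

#[local] Hint Resolve opnI : core.

Lemma nonempty a b : Rbar_lt a b -> exists s, interval a b s.
Proof.
intros H. destruct a as [a| |], b as [b| |]; simpl in H; try contradiction.
- exists ((a+b)/2). split; simpl; lra.
- exists (a+1). split; simpl; auto; lra.
- exists (b-1). split; simpl; auto; lra.
- exists 0. split; simpl; auto.
Qed.

Lemma norm1 a b alpha U d s : GH a b alpha U -> interval a b s -> dot d d = 1 ->
  xe alpha d s * xe alpha d s + qe alpha U d s * qe alpha U d s + ze U d s * ze U d s = 1.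
Proof. intros H Hs Hd. transitivity (dot d d); [|exact Hd]. rewrite (exp_at a b alpha U s d d H Hs).
 unfold xe, qe, ze. rewrite (dot_comm d (dT alpha s)), (dot_comm d (dV alpha U s)), (dot_comm d (U s)). ring. Qed.

Lemma norm2 a b alpha U d s : GH a b alpha U -> interval a b s ->
  ce alpha U d s * ce alpha U d s + he alpha U d s * he alpha U d s =
  xe alpha d s * xe alpha d s + ze U d s * ze U d s.
Proof. intros H Hs. destruct (fg_kg a b alpha U s H Hs) as [_ [_ E]]. unfold ce, he.
 transitivity ((ff alpha U s * ff alpha U s + gf alpha U s * gf alpha U s) *
   (xe alpha d s * xe alpha d s + ze U d s * ze U d s)); [ring|rewrite E; ring]. Qed.

Lemma VV1 a b alpha U s : GH a b alpha U -> interval a b s -> dot (dV alpha U s) (dV alpha U s) = 1.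
Proof. intros H Hs. unfold dV. rewrite VV_id. rewrite (GH_U a b alpha U), (GH_T a b alpha U), (GH_UT a b alpha U); auto. ring. Qed.

Lemma unitv_dot x d : dot (unitv x) d = dot x d / sqrt (dot x x).
Proof. unfold unitv, vnorm, vscale, dot; simpl. unfold Rdiv. ring. Qed.

Lemma Dr_ce a b alpha U d s : GH a b alpha U -> interval a b s ->
  dot (unitv (Dr alpha U s)) d = ce alpha U d s.
Proof. intros H Hs. rewrite unitv_dot.
 assert (E : dot (Dr alpha U s) (Dr alpha U s) = kg alpha U s * kg alpha U s + tg alpha U s * tg alpha U s).
 { unfold Dr. transitivity (tg alpha U s * tg alpha U s * dot (dT alpha s) (dT alpha s) +
     2 * tg alpha U s * kg alpha U s * dot (U s) (dT alpha s) + kg alpha U s * kg alpha U s * dot (U s) (U s)).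
   - unfold dot, vadd, vscale; simpl; ring.
   - rewrite (GH_U a b alpha U), (GH_T a b alpha U), (GH_UT a b alpha U); auto. ring. }
 rewrite E. fold (wf alpha U s). unfold ce, ff, gf, xe, ze.
 replace (dot (Dr alpha U s) d) with (tg alpha U s * dot (dT alpha s) d + kg alpha U s * dot (U s) d)
   by (unfold Dr, dot, vadd, vscale; simpl; ring).
 field. apply (wne a b); auto. Qed.

Lemma loc_nz (f : R -> R) s : continuous f s -> f s <> 0 -> locally s (fun t => f t <> 0).
Proof.
intros C N. apply continuity_pt_filterlim in C.
destruct (C (Rabs (f s)) (Rabs_pos_lt _ N)) as [del [Hd Hx]].
exists (mkposreal _ Hd). intros y Hy. change (Rabs (y - s) < del) in Hy.
destruct (Req_dec y s) as [->|Ne]; auto.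
assert (K : R_dist (f y) (f s) < Rabs (f s)).
{ apply Hx. split. split. exact I. intro; apply Ne; auto. exact Hy. }
unfold R_dist in K. intro Z. rewrite Z in K. rewrite Rminus_0_l, Rabs_Ropp in K. lra.
Qed.

#[local] Hint Resolve opnI : core.

Lemma qe_deriv a b alpha U d s : GH a b alpha U -> interval a b s ->
  is_derive (qe alpha U d) s (- wf alpha U s * he alpha U d s).
Proof. intros H Hs. eapply isd_eq. apply (d_qe a b); auto.
 destruct (fg_kg a b alpha U s H Hs) as [E1 [E2 _]]. rewrite E1, E2. unfold he. ring. Qed.

Lemma P23 a b alpha U : Rbar_lt a b -> GH a b alpha U ->
  rel_normal_slant_helix (interval a b) alpha U -> Dr_slant_helix (interval a b) alpha U.
Proof.
intros hab H [d [Hd [c Hc]]].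
destruct (nonempty a b hab) as [s0 Hs0].
assert (Hh : forall s, interval a b s -> he alpha U d s = 0).
{ intros s Hs. assert (Z := isd_const0 (interval a b) (qe alpha U d) c s _ (opnI a b) Hc Hs (qe_deriv a b alpha U d s H Hs)).
  pose proof (wne a b alpha U s H Hs).
  destruct (Rmult_integral _ _ Z) as [Z1|Z1]; auto. lra. }
exists d. split; auto. exists (ce alpha U d s0). intros s Hs.
rewrite (Dr_ce a b); auto.
apply (discv a b (ce alpha U d) (1 - c * c)); auto.
- intros t Ht. apply (Sm_cont (interval a b)); auto. apply (sm_ce a b); auto.
- intros t Ht. right. pose proof (norm1 a b alpha U d t H Ht Hd). pose proof (norm2 a b alpha U d t H Ht).
  unfold qe in *. rewrite (Hc t Ht) in *. rewrite (Hh t Ht) in *. lra.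
Qed.

Definition Wv alpha U t := vadd (vscale (ff alpha U t) (dT alpha t)) (vscale (gf alpha U t) (U t)).

Lemma ce_dot alpha U e t : ce alpha U e t = dot (Wv alpha U t) e.
Proof. unfold ce, Wv, xe, ze, dot, vadd, vscale; simpl; ring. Qed.

Lemma V3_ext x y : v1 x = v1 y -> v2 x = v2 y -> v3 x = v3 y -> x = y.
Proof. destruct x, y; simpl; intros; subst; auto. Qed.

Lemma P32 a b alpha U : Rbar_lt a b -> GH a b alpha U ->
  Dr_slant_helix (interval a b) alpha U -> rel_normal_slant_helix (interval a b) alpha U.
Proof.
intros hab H [d [Hd [c Hc]]].
destruct (nonempty a b hab) as [s0 Hs0].
assert (Hce : forall s, interval a b s -> ce alpha U d s = c).
{ intros s Hs. rewrite <- (Dr_ce a b alpha U d s H Hs). auto. }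
assert (Hth : forall s, interval a b s -> theta alpha U s * he alpha U d s = 0).
{ intros s Hs. apply (isd_const0 (interval a b) (ce alpha U d) c s); auto. apply (d_ce a b); auto. }
assert (Hq : forall s, interval a b s -> theta alpha U s <> 0 ->
   wf alpha U s * qe alpha U d s = theta alpha U s * c).
{ intros s Hs Hn.
  assert (L : locally s (fun t => theta alpha U t <> 0 /\ interval a b t)).
  { apply filter_and. apply loc_nz; auto. apply (Sm_cont (interval a b)); auto. apply (sm_theta a b); auto.
    apply opnI; auto. }
  assert (D0 : is_derive (he alpha U d) s 0).
  { apply is_derive_ext_loc with (fun _ => 0).
    - eapply filter_imp; [|exact L]. intros t [T1 T2]. specialize (Hth t T2).
      destruct (Rmult_integral _ _ Hth); [contradiction|auto].
    - apply (is_derive_const (K:=R_AbsRing) (V:=R_NormedModule) 0). }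
  pose proof (is_derive_Dunique _ _ _ _ D0 (d_he a b alpha U d s H Hs)) as E.
  rewrite (Hce s Hs) in E. lra. }
set (k := fun t => theta alpha U t / wf alpha U t).
assert (Hk : forall s, interval a b s -> k s = 0 \/ k s * k s = (1 - c * c) / (c * c)).
{ intros s Hs. unfold k. pose proof (wne a b alpha U s H Hs) as Wn.
  destruct (Req_dec (theta alpha U s) 0) as [Z|Z].
  - left. rewrite Z. unfold Rdiv. ring.
  - right. assert (Hh : he alpha U d s = 0).
    { destruct (Rmult_integral _ _ (Hth s Hs)); [contradiction|auto]. }
    pose proof (Hq s Hs Z) as Q.
    pose proof (norm1 a b alpha U d s H Hs Hd). pose proof (norm2 a b alpha U d s H Hs).
    rewrite (Hce s Hs), Hh in *.
    assert (Qk : qe alpha U d s = theta alpha U s / wf alpha U s * c).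
    { apply Rmult_eq_reg_l with (wf alpha U s); auto. rewrite Q. field. auto. }
    assert (Hc0 : c <> 0).
    { intro C0. rewrite C0 in Qk. rewrite Rmult_0_r in Qk. rewrite Qk, C0 in *. lra. }
    assert (E1 : 1 - c * c = qe alpha U d s * qe alpha U d s) by lra.
    rewrite E1, Qk. field. split; auto. }
assert (Kc : forall s, interval a b s -> k s = k s0).
{ intros s Hs. apply (discv a b k ((1 - c * c) / (c * c))); auto.
  intros t Ht. apply (Sm_cont (interval a b)); auto. unfold k. apply Sm_div; auto.
  apply (sm_theta a b); auto. apply (sm_w a b); auto. intros; apply (wne a b); auto. }
assert (Tk : forall s, interval a b s -> theta alpha U s = k s0 * wf alpha U s).
{ intros s Hs. rewrite <- (Kc s Hs). unfold k. field. apply (wne a b); auto. }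
destruct (Req_dec (k s0) 0) as [K0|K0].
- assert (Ce : forall e s, interval a b s -> ce alpha U e s = ce alpha U e s0).
  { intros e s Hs. apply (deriv0_const a b (ce alpha U e)); auto. intros t Ht. eapply isd_eq. apply (d_ce a b); auto.
    rewrite (Tk t Ht), K0. ring. }
  assert (Wc : forall s, interval a b s -> Wv alpha U s = Wv alpha U s0).
  { intros s Hs. apply V3_ext.
    - pose proof (Ce (mkV3 1 0 0) s Hs) as E. rewrite !ce_dot in E. unfold dot in E; simpl in E |- *. lra.
    - pose proof (Ce (mkV3 0 1 0) s Hs) as E. rewrite !ce_dot in E. unfold dot in E; simpl in E |- *. lra.
    - pose proof (Ce (mkV3 0 0 1) s Hs) as E. rewrite !ce_dot in E. unfold dot in E; simpl in E |- *. lra. }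
  exists (Wv alpha U s0). split.
  + destruct (fg_kg a b alpha U s0 H Hs0) as [_ [_ E3]].
    transitivity (ff alpha U s0 * ff alpha U s0 * dot (dT alpha s0) (dT alpha s0) +
      2 * ff alpha U s0 * gf alpha U s0 * dot (U s0) (dT alpha s0) + gf alpha U s0 * gf alpha U s0 * dot (U s0) (U s0)).
    * unfold Wv, dot, vadd, vscale; simpl; ring.
    * rewrite (GH_U a b alpha U), (GH_T a b alpha U), (GH_UT a b alpha U); auto. lra.
  + exists 0. intros s Hs. rewrite <- (Wc s Hs).
    transitivity (ff alpha U s * dot (dV alpha U s) (dT alpha s) + gf alpha U s * dot (dV alpha U s) (U s)).
    * unfold Wv, dot, vadd, vscale; simpl; ring.
    * unfold dV. rewrite VT_id, VU_id. ring.
- assert (Hh : forall s, interval a b s -> he alpha U d s = 0).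
  { intros s Hs. destruct (Rmult_integral _ _ (Hth s Hs)) as [Z|Z]; auto.
    rewrite (Tk s Hs) in Z. destruct (Rmult_integral _ _ Z) as [Z1|Z1]; [contradiction|].
    exfalso; apply (wne a b alpha U s); auto. }
  exists d. split; auto. exists (qe alpha U d s0). intros s Hs.
  change (qe alpha U d s = qe alpha U d s0).
  apply (deriv0_const a b (qe alpha U d)); auto. intros t Ht. eapply isd_eq. apply (qe_deriv a b); auto.
  rewrite (Hh t Ht). ring.
Qed.

Lemma sm_gamma a b alpha U y1 y2 y3 : GH a b alpha U -> smooth_on (interval a b) y1 ->
  smooth_on (interval a b) y2 -> smooth_on (interval a b) y3 ->
  VSm (interval a b) (assoc_curve alpha U y1 y2 y3).
Proof.
intros H h1 h2 h3. unfold assoc_curve.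
apply VSm_add; auto. apply VSm_of. destruct H as [X _]; exact X.
apply VSm_add; auto. apply VSm_scale; auto. apply smooth_Sm; auto. apply (sm_T a b alpha U); auto.
apply VSm_add; auto; apply VSm_scale; auto; try (apply smooth_Sm; auto).
apply sm_V; auto. apply (sm_U a b alpha U); auto.
Qed.

Lemma unit_scale (r : R) (X d : V3) : dot X X = 1 ->
  dot (unitv (vscale r X)) d = r * dot X d / sqrt (r * r).
Proof. intros HX. rewrite unitv_dot.
 replace (dot (vscale r X) (vscale r X)) with (r * r * dot X X) by (unfold dot, vscale; simpl; ring).
 rewrite HX, Rmult_1_r. f_equal. unfold dot, vscale; simpl; ring. Qed.

Lemma sqrt_sq_pos r : r <> 0 -> 0 < sqrt (r * r) /\ sqrt (r * r) * sqrt (r * r) = r * r.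
Proof. intros Hr. assert (0 < r * r) by (apply Rsqr_pos_lt; auto). split.
 apply sqrt_lt_R0; auto. apply sqrt_sqrt; lra. Qed.

Lemma P12 a b alpha U y1 y2 y3 Rf : Rbar_lt a b -> GH a b alpha U ->
  (forall s, interval a b s -> vD (assoc_curve alpha U y1 y2 y3) s = vscale (Rf s) (dV alpha U s) /\ Rf s <> 0) ->
  general_helix (interval a b) (assoc_curve alpha U y1 y2 y3) -> rel_normal_slant_helix (interval a b) alpha U.
Proof.
intros hab H hR [_ [d [Hd [c Hc]]]].
destruct (nonempty a b hab) as [s0 Hs0].
exists d. split; auto. exists (qe alpha U d s0). intros s Hs. change (qe alpha U d s = qe alpha U d s0).
apply (discv a b (qe alpha U d) (c * c)); auto.
- intros t Ht. apply (Sm_cont (interval a b)); auto. apply (sm_qe a b); auto.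
- intros t Ht. right. destruct (hR t Ht) as [E N]. specialize (Hc t Ht). rewrite E in Hc.
  rewrite unit_scale in Hc by (apply (VV1 a b); auto).
  destruct (sqrt_sq_pos _ N) as [P Q]. fold (qe alpha U d t) in Hc.
  set (S := sqrt (Rf t * Rf t)) in *. set (q := qe alpha U d t) in *.
  assert (E2 : Rf t * q = c * S) by (rewrite <- Hc; field; lra).
  apply Rmult_eq_reg_l with (Rf t * Rf t). 2: { apply Rmult_integral_contrapositive_currified; auto. }
  transitivity ((Rf t * q) * (Rf t * q)); [ring|]. rewrite E2.
  transitivity (c * c * (S * S)); [ring|]. rewrite Q. ring.
Qed.

Lemma P21 a b alpha U y1 y2 y3 Rf : Rbar_lt a b -> GH a b alpha U ->
  smooth_on (interval a b) y1 -> smooth_on (interval a b) y2 -> smooth_on (interval a b) y3 ->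
  (forall s, interval a b s -> vD (assoc_curve alpha U y1 y2 y3) s = vscale (Rf s) (dV alpha U s) /\ Rf s <> 0) ->
  rel_normal_slant_helix (interval a b) alpha U -> general_helix (interval a b) (assoc_curve alpha U y1 y2 y3).
Proof.
intros hab H h1 h2 h3 hR [d [Hd [c Hc]]].
destruct (nonempty a b hab) as [s0 Hs0].
set (gam := assoc_curve alpha U y1 y2 y3) in *.
set (Rg := fun t => dot (vD gam t) (dV alpha U t)).
assert (RgE : forall s, interval a b s -> Rg s = Rf s).
{ intros s Hs. unfold Rg. rewrite (proj1 (hR s Hs)).
  replace (dot (vscale (Rf s) (dV alpha U s)) (dV alpha U s)) with (Rf s * dot (dV alpha U s) (dV alpha U s))
    by (unfold dot, vscale; simpl; ring).
  rewrite (VV1 a b); auto. ring. }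
assert (SRg : Sm (interval a b) Rg).
{ apply Sm_dot; auto. apply VSm_D. apply sm_gamma; auto. apply sm_V; auto. }
assert (Rn : forall s, interval a b s -> Rg s <> 0).
{ intros s Hs. rewrite RgE; auto. apply hR; auto. }
set (g := fun t => c * Rg t / sqrt (Rg t * Rg t)).
assert (Hg : forall s, interval a b s -> dot (unitv (vD gam s)) d = g s).
{ intros s Hs. unfold g. rewrite (proj1 (hR s Hs)). rewrite unit_scale by (apply (VV1 a b); auto).
  rewrite (Hc s Hs), (RgE s Hs). field. apply Rgt_not_eq. apply sqrt_sq_pos. apply hR; auto. }
split.
- intros s Hs Z. rewrite (proj1 (hR s Hs)) in Z.
  assert (Z2 : dot (vscale (Rf s) (dV alpha U s)) (vscale (Rf s) (dV alpha U s)) = 0).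
  { rewrite Z. unfold dot, vzero; simpl; ring. }
  replace (dot (vscale (Rf s) (dV alpha U s)) (vscale (Rf s) (dV alpha U s))) with (Rf s * Rf s * dot (dV alpha U s) (dV alpha U s))
    in Z2 by (unfold dot, vscale; simpl; ring).
  rewrite (VV1 a b) in Z2; auto. rewrite Rmult_1_r in Z2.
  destruct (Rmult_integral _ _ Z2); apply (proj2 (hR s Hs)); auto.
- exists d. split; auto. exists (g s0). intros s Hs. rewrite Hg; auto.
  apply (discv a b g (c * c)); auto.
  + intros t Ht. apply (Sm_cont (interval a b)); auto. unfold g. apply Sm_div; auto.
    * apply Sm_mult; auto. apply Sm_const; auto.
    * apply Sm_sqrt; auto. apply Sm_mult; auto. intros. apply Rsqr_pos_lt; auto.
    * intros. apply Rgt_not_eq. apply sqrt_sq_pos; auto.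
  + intros t Ht. right. unfold g. destruct (sqrt_sq_pos _ (Rn t Ht)) as [P Q].
    set (S := sqrt (Rg t * Rg t)) in *.
    transitivity (c * c * (Rg t * Rg t) / (S * S)); [field; lra|].
    rewrite Q. field. apply Rn; auto.
Qed.

Theorem main a b (hab : Rbar_lt a b)
  (alpha U : R -> V3) (y1 y2 y3 Rf : R -> R)
  (halpha : vsmooth_on (interval a b) alpha)
  (hU : vsmooth_on (interval a b) U)
  (hunit : forall s, interval a b s -> dot (dT alpha s) (dT alpha s) = 1)
  (hUunit : forall s, interval a b s -> dot (U s) (U s) = 1)
  (hUT : forall s, interval a b s -> dot (U s) (dT alpha s) = 0)
  (hkt : forall s, interval a b s -> (kg alpha U s, tg alpha U s) <> (0, 0))
  (hy1 : smooth_on (interval a b) y1)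
  (hy2 : smooth_on (interval a b) y2)
  (hy3 : smooth_on (interval a b) y3)
  (hR : forall s, interval a b s ->
     vD (assoc_curve alpha U y1 y2 y3) s
     = vscale (Rf s) (dV alpha U s) /\ Rf s <> 0) :
  (general_helix (interval a b) (assoc_curve alpha U y1 y2 y3) <-> rel_normal_slant_helix (interval a b) alpha U) /\
  (rel_normal_slant_helix (interval a b) alpha U <-> Dr_slant_helix (interval a b) alpha U).
Proof.
assert (H : GH a b alpha U) by exact (conj halpha (conj hU (conj hunit (conj hUunit (conj hUT hkt))))).

split; split.
- apply (P12 a b alpha U y1 y2 y3 Rf); auto.
- apply (P21 a b alpha U y1 y2 y3 Rf); auto.
- apply P23; auto.
- apply P32; auto.
Qed.


Theorem theorem3p12
  (a b : Rbar) (hab : Rbar_lt a b)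
  (alpha U : R -> V3) (y1 y2 y3 Rf : R -> R)
  (halpha : vsmooth_on (interval a b) alpha)
  (hU : vsmooth_on (interval a b) U)
  (hunit : forall s, interval a b s -> dot (dT alpha s) (dT alpha s) = 1)
  (hUunit : forall s, interval a b s -> dot (U s) (U s) = 1)
  (hUT : forall s, interval a b s -> dot (U s) (dT alpha s) = 0)
  (hkt : forall s, interval a b s -> (kg alpha U s, tg alpha U s) <> (0, 0))
  (hy1 : smooth_on (interval a b) y1)
  (hy2 : smooth_on (interval a b) y2)
  (hy3 : smooth_on (interval a b) y3)
  (hR : forall s, interval a b s ->
     vD (assoc_curve alpha U y1 y2 y3) s
     = vscale (Rf s) (dV alpha U s) /\ Rf s <> 0) :
  (general_helix (interval a b) (assoc_curve alpha U y1 y2 y3) <-> rel_normal_slant_helix (interval a b) alpha U) /\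
  (rel_normal_slant_helix (interval a b) alpha U <-> Dr_slant_helix (interval a b) alpha U).
Proof.
exact (main a b hab alpha U y1 y2 y3 Rf halpha hU hunit hUunit hUT hkt hy1 hy2 hy3 hR).
Qed.
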